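(* There exists a constant $C=C(\underline h,\overline h,\underline w,\overline w)>0$ such that for every grid size $N\in\mathbb{N}$ there exists a ReLU FNO $\mathcal{N}^{\mathrm{FNO}}$ with constant (in $x$) output function, $k_{\max}=0$, $d_v\le C$, depth $\le C$, size $\le C$, such that for every input $\bar u=h\,1_{[-w/2,w/2]}(\cdot-\xi)$ with $h\in[\underline h,\overline h]$, $w\in[\underline w,\overline w]$, $\xi\in[0,2\pi]$, \[ \big|\mathcal{N}^{\mathrm{FNO}}(\bar u)(x)-w\big|\le\frac CN\quad\text{for all }x\in\mathbb{T}. \]
   Context: $\mathbb{T}=\mathbb{R}/2\pi\mathbb{Z}$; $0<\underline h<\overline h$, $0<\underline w<\overline w<2\pi$; $1_{[-w/2,w/2]}$ is periodized. FNO with grid size $N$: $x_j=2\pi j/N$, $\mathcal{F}_Nv(k)=\frac1N\sum_{j=1}^Nv(x_j)e^{-ikx_j}$; an FNO with lifting dimension $d_v$, cut-off $k_{\max}$, depth $L$, ReLU $\sigma$ is $Q\circ\mathcal{L}_L\circ\dots\circ\mathcal{L}_1\circ R$, $(R\bar u)(x)=R(\bar u(x),x)$ ($R$ a shallow ReLU network into $\mathbb{R}^{d_v}$), $(\mathcal{L}_\ell v)(x)=\sigma(W_\ell v(x)+b_\ell(x)+\sum_{|k|\le k_{\max}}P_\ell(k)\mathcal{F}_Nv(k)e^{ikx})$ with $W_\ell\in\mathbb{R}^{d_v\times d_v}$, $P_\ell(k)\in\mathbb{C}^{d_v\times d_v}$, real bias $b_\ell(x)=\sum_{|k|\le k_{\max}}\hat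 b_\ell(k)e^{ikx}$, $Q$ linear pointwise. Depth $=L$; size = number of tunable parameters. *)

(* Defs.v *)
From HB Require Import structures.
From mathcomp Require Import all_boot all_order all_algebra.
From mathcomp Require Import all_classical all_reals all_analysis.
Set Implicit Arguments. Unset Strict Implicit. Unset Printing Implicit Defensive.
Import Order.TTheory GRing.Theory Num.Theory.
Local Open Scope ring_scope.

Section FNO.
Variable R : realType.

Definition relu_vec n (v : 'cV[R]_n) : 'cV[R]_n := map_mx (fun t => Num.max t 0) v.

(* periodized indicator: h * 1_{[-w/2,w/2]}(x - xi), x in R viewed mod 2pi *)
Definition box_input (h w xi : R) (x : R) : R :=
  if `[< exists m : int, `|x - xi - m%:~R * (2 * pi)| <= w / 2 >] then h else 0.

(* shallow ReLU lifting network R^2 -> R^dv (input (u(x), x)) of hidden width m *)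
Record lifting (dv m : nat) := Lifting {
  lift_A1 : 'M[R]_(m, 2); lift_c1 : 'cV[R]_m;
  lift_A2 : 'M[R]_(dv, m); lift_c2 : 'cV[R]_dv }.

Definition eval_lifting dv m (P : lifting dv m) (u x : R) : 'cV[R]_dv :=
  lift_A2 P *m relu_vec (lift_A1 P *m (\col_i (if val i == 0%N then u else x))
                          + lift_c1 P) + lift_c2 P.

(* Fourier layer: W, P(k) = A k + i B k (complex dv x dv), real bias
   b(x) = Re sum_k bhat(k) e^{ikx} with bhat(k) = bc k + i bs k *)
Record fno_layer (dv : nat) := FnoLayer {
  lay_W : 'M[R]_dv;
  lay_A : int -> 'M[R]_dv; lay_B : int -> 'M[R]_dv;
  lay_bc : int -> 'cV[R]_dv; lay_bs : int -> 'cV[R]_dv }.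

(* grid points x_j = 2 pi j / N, j = 0..N-1 (same set as j = 1..N in T) *)
Definition grid_pt (N : nat) (j : nat) : R := 2 * pi * j%:R / N%:R.

Definition freq (kmax : nat) (i : 'I_(2 * kmax).+1) : int := (i%:Z - kmax%:Z)%R.

(* real and (minus) imaginary parts of F_N v(k) = Fc - i Fs *)
Definition Fcos dv (N : nat) (v : R -> 'cV[R]_dv) (k : int) : 'cV[R]_dv :=
  N%:R^-1 *: \sum_(j < N) (cos (k%:~R * grid_pt N j) *: v (grid_pt N j)).
Definition Fsin dv (N : nat) (v : R -> 'cV[R]_dv) (k : int) : 'cV[R]_dv :=
  N%:R^-1 *: \sum_(j < N) (sin (k%:~R * grid_pt N j) *: v (grid_pt N j)).

(* (L v)(x) = sigma(W v(x) + b(x) + Re sum_{|k|<=kmax} P(k) F_N v(k) e^{ikx}) *)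
Definition eval_layer dv (N kmax : nat) (L : fno_layer dv)
    (v : R -> 'cV[R]_dv) (x : R) : 'cV[R]_dv :=
  relu_vec (lay_W L *m v x
    + \sum_(i < (2 * kmax).+1)
        (let k := freq i in
         cos (k%:~R * x) *: lay_bc L k - sin (k%:~R * x) *: lay_bs L k)
    + \sum_(i < (2 * kmax).+1)
        (let k := freq i in
         cos (k%:~R * x) *: (lay_A L k *m Fcos N v k + lay_B L k *m Fsin N v k)
       - sin (k%:~R * x) *: (lay_B L k *m Fcos N v k - lay_A L k *m Fsin N v k))).

Definition eval_layers dv N kmax (Ls : seq (fno_layer dv)) (v : R -> 'cV[R]_dv)
  : R -> 'cV[R]_dv := foldl (fun w L => eval_layer N kmax L w) v Ls.

Record FNO := MkFNO {
  fno_dv : nat; fno_width : nat; fno_kmax : nat;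
  fno_lift : lifting fno_dv fno_width;
  fno_layers : seq (fno_layer fno_dv);
  fno_Q : 'rV[R]_fno_dv }.

Definition fno_depth (F : FNO) : nat := size (fno_layers F).

(* number of tunable real parameters (complex parameters count twice) *)
Definition fno_size (F : FNO) : nat :=
  let dv := fno_dv F in let m := fno_width F in let K := (2 * fno_kmax F).+1 in
  (2 * m + m + dv * m + dv)
  + fno_depth F * (dv * dv + 2 * K * (dv * dv) + 2 * K * dv)
  + dv.

(* output function of the FNO with grid size N on input u : T -> R
   (functions on T represented as functions on R, evaluated at x in [0,2pi)) *)
Definition eval_fno (F : FNO) (N : nat) (u : R -> R) (x : R) : R :=
  (fno_Q F *m eval_layers N (fno_kmax F) (fno_layers F)
             (fun y => eval_lifting (fno_lift F) (u y) y) x) 0 0.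

End FNO.

(* Main.v *)
Require Import Defs.
From HB Require Import structures.
From mathcomp Require Import all_boot all_order all_algebra.
From mathcomp Require Import all_classical all_reals all_analysis.
From mathcomp Require Import lra ring zify.
Import Order.TTheory GRing.Theory Num.Theory.
Local Open Scope ring_scope.

Section S.
Variable R : realType.
Variable hl : R.

Definition gA1 : 'M[R]_(2, 2) := \matrix_(i, j) (if val j == 0%N then hl^-1 else 0).
Definition gc1 : 'cV[R]_2 := \col_i (if val i == 0%N then 0 else -1).
Definition gA2 : 'M[R]_(1, 2) := \matrix_(i, j) (if val j == 0%N then 1 else -1).
Definition myLay : fno_layer R 1 :=
  FnoLayer 0 (fun _ => (2 * pi)%:M) (fun _ => 0) (fun _ => 0) (fun _ => 0).
Definition myF : FNO R :=
  @MkFNO R 1 2 0 (Lifting gA1 gc1 gA2 0) [:: myLay] (const_mx 1).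

Lemma reluE n (v:'cV[R]_n) i j : relu_vec v i j = Num.max (v i j) 0.
Proof. by rewrite /relu_vec mxE. Qed.
Lemma cmx1 i j : (const_mx 1 : 'rV[R]_1) i j = 1.
Proof. by rewrite mxE. Qed.

Lemma scE n (c : R) (v:'cV[R]_n) i j : (c *: v) i j = c * v i j.
Proof. by rewrite mxE. Qed.

Definition gg (t : R) : R := Num.max (hl^-1 * t) 0 - Num.max (hl^-1 * t - 1) 0.

Lemma lift_eval u x : eval_lifting (Lifting gA1 gc1 gA2 0) u x 0 0 = gg u.
Proof.
rewrite /eval_lifting /= !mxE !big_ord_recr big_ord0 /= !mxE /=.
rewrite !big_ord_recr big_ord0 /= !mxE /=.
rewrite /gg big_ord0 !add0r !mul0r !addr0 mul1r mulN1r. by [].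
Qed.

Lemma eval_myF N u x : eval_fno myF N u x =
  Num.max (2 * pi * (N%:R^-1 * \sum_(j < N) gg (u (grid_pt R N j)))) 0.
Proof.
rewrite /eval_fno /eval_layers /= /eval_layer /=.
rewrite !big_ord1.
have -> : freq (kmax:=0) ord0 = 0 by [].
rewrite mul0r cos0 sin0 !scale1r !scale0r !mul0mx ?scaler0 !subr0 !add0r addr0 mul_scalar_mx.
rewrite mxE big_ord1 cmx1 mul1r reluE mxE /Fcos mxE summxE.
congr (Num.max (_ * (_ * _)) _); apply: eq_bigr => j _.
by rewrite scE mulr0z mul0r cos0 mul1r lift_eval.
Qed.
End S.

Lemma count_ord (R : numDomainType) (N L : nat) (n0 : int) : (0 < N)%N -> (L <= N)%N ->
  \sum_(j < N) (if (((j%:Z - n0) %% N%:Z)%Z < L%:Z) then (1:R) else 0) = L%:R.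
Proof.
case: N => // n _ HL.
set c := `|((- n0) %% n.+1%:Z)%Z|%N.
have key : forall j : 'I_n.+1, ((j%:Z - n0) %% n.+1%:Z)%Z = ((j + c) %% n.+1)%N%:Z.
  by move=> j; rewrite -modz_nat PoszD /c gez0_abs ?modz_ge0 // modzDmr.

rewrite (eq_bigr (fun j : 'I_n.+1 => if (val (j + inZp c)%R < L)%N then (1:R) else 0)); last first.
  by move=> j _; rewrite key ltz_nat /= modnDmr.
rewrite [LHS](_ : _ = \sum_(i < n.+1) (if (i < L)%N then (1:R) else 0)); last first.
  by symmetry; apply: (reindex_inj (addIr (inZp c))).
rewrite -big_mkcond /= -(@big_ord_widen _ 0 +%R L n.+1 (fun _ => (1:R)) HL) sumr_const card_ord.
by [].
Qed.

Lemma box_char (R : realType) (N : nat) (w xi : R) (j : nat) :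
  (0 < N)%N ->
  let q := 2 * pi / N%:R in
  let a := (xi - w / 2) / q in
  let b := (xi + w / 2) / q in
  let n0 := Num.ceil a in
  let L := Num.floor b - n0 + 1 in
  L <= N%:Z ->
  `[< exists m : int, `|grid_pt R N j - xi - m%:~R * (2 * pi)| <= w / 2 >]
   = (((j%:Z - n0) %% N%:Z)%Z < L).
Proof.
move=> N0 q a b n0 L HLN.
have Nr : 0 < N%:R :> R by rewrite ltr0n.
have qpos : 0 < q by rewrite /q divr_gt0 // mulr_gt0 // pi_gt0.
have Hk : forall k : int, (`|k%:~R * q - xi| <= w/2) = (n0 <= k <= Num.floor b).
  move=> k; rewrite ler_norml ceil_le_int floor_ge_int (ler_pdivrMr _ _ qpos) (ler_pdivlMr _ _ qpos).
  by apply/idP/idP => /andP [H1 H2]; apply/andP; split; lra.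
have Hg : forall m : int, grid_pt R N j - xi - m%:~R * (2 * pi)
    = (j%:Z - m * N%:Z)%:~R * q - xi.
  move=> m; rewrite /grid_pt /q intrB intrM -!pmulrn.
  field; rewrite lt0r_neq0 //.
apply/asboolP/idP.
- move=> [m]; rewrite Hg Hk => /andP [H1 H2].
  have -> : (j%:Z - n0) = m * N%:Z + ((j%:Z - m * N%:Z) - n0) by ring.
  rewrite modzMDl modz_small; first by rewrite /L; lia.
  rewrite /L in HLN; apply/andP; split; lia.
- move=> H.
  exists ((j%:Z - n0) %/ N%:Z)%Z; rewrite Hg Hk.
  have := divz_eq (j%:Z - n0) N%:Z.
  have : (0 <= ((j%:Z - n0) %% N%:Z)%Z) by rewrite modz_ge0 // eqz_nat -lt0n.
  move: H; rewrite /L.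
  set r := ((j%:Z - n0) %% N%:Z)%Z; set m := ((j%:Z - n0) %/ N%:Z)%Z.
  move=> H1 H2 H3.
  have -> : j%:Z - m * N%:Z = n0 + r by rewrite -[j%:Z](subrK n0) H3; ring.
  apply/andP; split; lia.
Qed.

Lemma mx0 (R : realDomainType) (x : R) : 0 <= x -> Num.max x 0 = x.
Proof. by move=> h; rewrite max_l. Qed.
Lemma mx1 (R : realDomainType) (x : R) : x <= 0 -> Num.max x 0 = 0.
Proof. by move=> h; rewrite max_r. Qed.

Theorem mainTheorem12 (R : realType) (hl hu wl wu : R) :
  0 < hl -> hl < hu -> 0 < wl -> wl < wu -> wu < 2 * pi ->
  exists C : R, 0 < C /\
  forall N : nat, (0 < N)%N ->
  exists F : FNO R,
    [/\ fno_kmax F = 0%N,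
        (fno_dv F)%:R <= C /\ (fno_depth F)%:R <= C,
        (fno_size F)%:R <= C,
        (forall (u : R -> R) (x y : R), 0 <= x < 2 * pi -> 0 <= y < 2 * pi ->
           eval_fno F N u x = eval_fno F N u y) &
        (forall h w xi : R, hl <= h <= hu -> wl <= w <= wu -> 0 <= xi <= 2 * pi ->
           forall x : R, 0 <= x < 2 * pi ->
             `|eval_fno F N (box_input h w xi) x - w| <= C / N%:R)].
Proof.
move=> hl0 hlu wl0 wlu wu2.
have pi0 : 0 < pi :> R := pi_gt0 R.
exists (15 + 2 * pi); split; first lra.
move=> N N0; exists (@myF R hl); split.
- by [].
- have H1 : (1:R) <= 15 + 2 * pi by lra.
  by split; apply: H1.
- have H1 : (15:R) <= 15 + 2 * pi by lra.
  by apply: H1.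
- by move=> u x y _ _; rewrite !eval_myF.
move=> h w xi /andP [h1 h2] /andP [w1 w2] _ x _.
rewrite eval_myF.
have Nr : 0 < N%:R :> R by rewrite ltr0n.
pose q : R := 2 * pi / N%:R.
have qpos : 0 < q by rewrite /q divr_gt0 // mulr_gt0.
pose a : R := (xi - w / 2) / q.
pose b : R := (xi + w / 2) / q.
pose n0 : int := Num.ceil a.
pose L : int := Num.floor b - n0 + 1.
have Hba : q * (b - a) = w by rewrite /b /a; field; rewrite gt_eqF.
have HqN : q * N%:R = 2 * pi by rewrite /q; field; rewrite gt_eqF.
have Hba1 : b - a < N%:R by rewrite -(ltr_pM2l qpos) Hba HqN; lra.
have Hba0 : 0 < b - a by rewrite -(ltr_pM2l qpos) Hba mulr0; lra.
have HLr : L%:~R = (Num.floor b)%:~R - n0%:~R + 1 :> R by rewrite /L intrD intrB.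
have f1 := floor_le b. have f2 := floor_itv b. move/andP: f2 => [_ f2].
rewrite intrD in f2.
have c1 := ceil_ge a. have c2 := ceilB1_lt a. rewrite intrB in c2.
have HL1 : L%:~R <= b - a + 1 :> R by rewrite HLr; lra.
have HL2 : b - a - 1 < L%:~R :> R by rewrite HLr; lra.
have HLN : L <= N%:Z.
  clearbody L n0 b a q.
  have : L%:~R < (N%:Z + 1)%:~R :> R by rewrite intrD -pmulrn; lra.
  rewrite ltr_int => HH; clear -HH; lia.
have HL0 : 0 <= L.
  clearbody L n0 b a q.
  have : (-1)%:~R < L%:~R :> R by rewrite intrN; lra.
  rewrite ltr_int => HH; clear -HH; lia.
have HLe : L = (`|L|%N)%:Z by rewrite gez0_abs.
have Hsum : \sum_(j < N) @gg R hl (box_input h w xi (grid_pt R N j))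
    = \sum_(j < N) (if (((j%:Z - n0) %% N%:Z)%Z < (`|L|%N)%:Z) then (1:R) else 0).
  apply: eq_bigr => j _.
  rewrite /box_input (@box_char R N w xi j N0) // -/q -/a -/b -/n0 -/L -HLe.
  case: ifP => _; rewrite /gg.
  + have hh : 1 <= hl^-1 * h by rewrite mulrC ler_pdivlMr // mul1r.
    rewrite mx0; last lra.
    rewrite mx0; last lra.
    lra.
  + rewrite mulr0 (@mx1 _ 0) // (@mx1 _ (0 - 1)); [by rewrite subrr | lra].
have qdef : q = 2 * pi / N%:R by [].
clearbody L n0 b a q.
rewrite Hsum count_ord //; last by rewrite -lez_nat -HLe.
rewrite natr_absz (ger0_norm HL0).
rewrite mx0; last by rewrite mulr_ge0 ?mulr_ge0 ?invr_ge0 ?ler0n ?ler0z //; lra.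
have -> : 2 * pi * (N%:R^-1 * L%:~R) = q * L%:~R by rewrite qdef; field; rewrite gt_eqF.
have -> : (15 + 2 * pi) / N%:R = q + 15 / N%:R by rewrite qdef; field; rewrite gt_eqF.
have h15 : 0 <= 15 / N%:R :> R by rewrite divr_ge0 // ler0n.
rewrite -Hba -mulrBr.
have e1 : q * (L%:~R - (b - a)) <= q * 1 by rewrite ler_wpM2l //; [lra | lra].
have e2 : q * (-1) <= q * (L%:~R - (b - a)) by rewrite ler_wpM2l //; [lra | lra].
rewrite ler_norml; apply/andP; split; lra.
Qed.
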